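(* Let $p$ and $q$ be distinct primes. Let $G=Q\rtimes P$ be a finite non-abelian semi-direct product of a Sylow $q$-subgroup $Q$ by a non-normal cyclic Sylow $p$-subgroup $P$. Suppose that $Q$ is special, so either $Q$ is elementary abelian or $Q'=Z(Q)=\Phi(Q)$, and suppose that $P$ acts by conjugation trivially on $Q'$ and irreducibly on $Q/Q'$. Then $G$ is exponent-critical.
   Context: A finite group $G$ is exponent-critical if $\exp(G)$ is not the least common multiple of the exponents of the proper non-abelian subgroups of $G$. A $q$-group $Q$ is special if either $Q$ is elementary abelian or $Q$ has nilpotency class $2$ with $Q'=Z(Q)=\Phi(Q)$ elementary abelian. *)

(* Defs.v *)
From mathcomp Require Import all_boot all_fingroup all_solvable.
Set Implicit Arguments. Unset Strict Implicit. Unset Printing Implicit Defensive.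
Local Open Scope group_scope.

Definition exponent_critical (gT : finGroupType) (G : {group gT}) : Prop :=
  exponent G <> \big[lcmn/1%N]_(H : {group gT} | (H \proper G) && ~~ abelian H)
                   exponent H.

Definition special_qgroup (q : nat) (gT : finGroupType) (Q : {group gT}) : Prop :=
  q.-abelem Q \/
  [/\ nil_class Q = 2, Q^`(1) = 'Z(Q), 'Z(Q) = 'Phi(Q) & q.-abelem Q^`(1)].

(* Main.v *)
Require Import Defs.
From mathcomp Require Import all_boot all_fingroup all_solvable.
Local Open Scope group_scope.

Lemma ppow_dvd_biglcm (I : finType) (Pr : pred I) (F : I -> nat) p a :
  prime p -> 0 < a -> (forall i, 0 < F i) ->
  p ^ a %| \big[lcmn/1%N]_(i | Pr i) F i -> exists2 i, Pr i & p ^ a %| F i.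
Proof.
move=> pp a0 F0 hdiv.
case: (boolP [exists i, Pr i && (p ^ a %| F i)]) => [/existsP[i /andP[? ?]]|hno]; first by exists i.
have key : (0 < \big[lcmn/1%N]_(i | Pr i) F i) &&
           ((\big[lcmn/1%N]_(i | Pr i) F i)`_p %| p ^ a.-1).
  apply: (big_ind (fun x => (0 < x) && (x`_p %| p ^ a.-1))).
  - by rewrite partn1 dvd1n.
  - move=> x y /andP[x0 hx] /andP[y0 hy].
    by rewrite lcmn_gt0 x0 y0 partn_lcm // dvdn_lcm hx hy.
  - move=> i Pi; rewrite F0 /= p_part dvdn_exp2l //.
    have : ~~ (p ^ a %| F i) by apply/negP => h; move/negP: hno; apply; apply/existsP; exists i; rewrite Pi.
    rewrite pfactor_dvdn // -ltnNge => h; rewrite -ltnS prednK //.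
case/andP: key => N0 hN.
have h1 : (p ^ a)`_p %| (\big[lcmn/1%N]_(i | Pr i) F i)`_p by apply: partn_dvd.
rewrite part_pnat_id ?pnatX ?pnat_id ?orbT // in h1.
have := dvdn_trans h1 hN.
rewrite pfactor_dvdn ?expn_gt0 ?prime_gt0 // pfactorK //.
by case: a a0 {hdiv hno h1 hN} => // n _; rewrite ltnn.
Qed.

Lemma core (gT : finGroupType) (q : nat) (G Q P H : {group gT}) :
  Q ><| P = G -> cyclic P -> special_qgroup q Q ->
  P \subset 'C(Q^`(1)) ->
  acts_irreducibly P (Q / Q^`(1)) 'Q ->
  P \subset H -> H \subset G -> ~~ abelian H -> H :=: G.
Proof.
move=> defG cycP specQ cPD irr sPH sHG nabH.
have [nQG sPG mulQP nQP tiQP] := sdprod_context defG.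
set D := Q^`(1).
have [abD sDPhi] : abelian D /\ D \subset 'Phi(Q).
  case: specQ => [abQ | [_ e1 e2 abD]].
    have /derG1P D1 := abelem_abelian abQ.
    by rewrite /D D1 abelian1 sub1G.
  by rewrite /D e1 e2 subxx (abelem_abelian (p := q)) // -e2 -e1.
have sDQ : D \subset Q by apply: der_sub.
have nDQ : Q \subset 'N(D) by apply: normal_norm (der_normal 1 Q).
have nDP : P \subset 'N(D) by apply: subset_trans cPD (cent_sub _).
have nHQP : P \subset 'N(H :&: Q).
  by rewrite normsI // (subset_trans sPH (normG H)).
have nDHQ : H :&: Q \subset 'N(D) by rewrite subIset // nDQ orbT.
case/mingroupP: irr => _ minQ.
have [triv | ntriv] := eqVneq ((H :&: Q) / D) 1.
  have sHQD : H :&: Q \subset D.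
    by rewrite -(quotient_sub1 nDHQ) triv.
  have defH : (H :&: Q) * P = H.
    by rewrite group_modr // mulQP; apply/setIidPl.
  have : abelian H.
    rewrite -defH abelianM (abelianS sHQD abD) cyclic_abelian //=.
    by rewrite (subset_trans cPD) // centS.
  by rewrite (negbTE nabH).
have eqQ : (H :&: Q)%G / D = Q / D.
  apply: minQ; first by rewrite ntriv /= actsQ.
  by rewrite quotientS // subsetIr.
have sQHD : Q \subset D * (H :&: Q).
  by rewrite -quotientSK // -eqQ.
have defQ : 'Phi(Q) <*> (H :&: Q) = Q.
  apply/eqP; rewrite eqEsubset join_subG Phi_sub subsetIr /=.
  apply: subset_trans sQHD _; rewrite -genM_join sub_gen // mulSg //.
have sQH : Q \subset H.
  by have := Phi_nongen defQ; rewrite genGid => <-; apply: subsetIl.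
by apply/eqP; rewrite eqEsubset sHG /= -mulQP mul_subG.
Qed.

Theorem mainTheorem10 (gT : finGroupType) (p q : nat) (G Q P : {group gT}) :
  prime p -> prime q -> p != q ->
  Q \in 'Syl_q(G) -> P \in 'Syl_p(G) ->
  Q ><| P = G ->
  cyclic P -> ~~ (P <| G) -> ~~ abelian G ->
  special_qgroup q Q ->
  P \subset 'C(Q^`(1)) ->
  acts_irreducibly P (Q / Q^`(1)) 'Q ->
  exponent_critical G.
Proof.
move=> pp _ _ _ PSyl defG cycP nPG _ specQ cPD irr.
have [nQG sPG mulQP nQP tiQP] := sdprod_context defG.
have sylP : p.-Sylow(G) P by move: PSyl; rewrite inE.
have pP := pHall_pgroup sylP.
set a := logn p #|P|.
have cardP : #|P| = (p ^ a)%N := card_pgroup pP.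
have a0 : 0 < a.
  rewrite lt0n; apply/negP => /eqP a0; move: nPG; rewrite a0 in cardP.
  have /eqP -> : P :==: 1 by rewrite trivg_card_le1 cardP.
  by rewrite normal1.
have [x defP] := cyclicP cycP.
have dPG : (p ^ a)%N %| exponent G.
  by rewrite -cardP defP dvdn_exponent // -cycle_subG -defP.
move=> eqE; rewrite eqE in dPG.
have [H /andP[prH nabH] dH] :=
  @ppow_dvd_biglcm _ _ (fun H : {group gT} => exponent H) p a pp a0 (fun H => exponent_gt0 H) dPG.
have [y yH dy] := @ppow_dvd_biglcm _ _ (fun y : gT => #[y]) p a pp a0 (fun y => order_gt0 y) dH.
set k := #[y] %/ (p ^ a)%N.
have k0 : 0 < k by rewrite divn_gt0 ?expn_gt0 ?prime_gt0 // dvdn_leq.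
have ordz : #[y ^+ k] = (p ^ a)%N.
  rewrite orderXdiv; last by apply/dvdnP; exists ((p ^ a)%N); rewrite /k mulnC divnK.
  by rewrite -{1}(divnK dy) -/k mulKn.
have sHG := proper_sub prH.
have zH : y ^+ k \in H by rewrite groupX.
have sZG : <[y ^+ k]> \subset G by rewrite cycle_subG (subsetP sHG).
have pZ : p.-group <[y ^+ k]> by rewrite /pgroup -orderE ordz pnatX pnat_id.
have [g gG sZPg] := Sylow_subJ sylP sZG pZ.
have eqZ : <[y ^+ k]> = P :^ g.
  by apply/eqP; rewrite eqEcard sZPg cardJg -orderE ordz cardP leqnn.
have sPgH : P :^ g \subset H by rewrite -eqZ cycle_subG.
have sPK : P \subset (H :^ g^-1)%G by rewrite /= -sub_conjg.
have sKG : (H :^ g^-1)%G \subset G.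
  by rewrite /= -(conjGid (groupVr gG)) conjSg.
have nabK : ~~ abelian (H :^ g^-1)%G by rewrite /= abelianJ.
have := @core _ _ _ _ _ _ defG cycP specQ cPD irr sPK sKG nabK.
move: prH; rewrite -(properJ _ _ g^-1) (conjGid (groupVr gG)) => prH eqK.
by rewrite /= eqK properxx in prH.
Qed.
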